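(* Suppose every $f_i$ is monotone and submodular. Let $S^{(1)}_{\rm tr},S^{(1)}_1,\dots,S^{(1)}_m$ be the output of Algorithm 1 and $S^{(2)}_{\rm tr},S^{(2)}_1,\dots,S^{(2)}_m$ the output of Algorithm 2. Set $\theta_1=\sum_i f_i(S^{(1)}_{\rm tr}\cup S^{(1)}_i)$, $\theta_2=\sum_i f_i(S^{(2)}_{\rm tr}\cup S^{(2)}_i)$, $\beta=\sum_i f_i(S^{(1)}_{\rm tr})$, $\gamma=\sum_i f_i(S^{(2)}_i)$. Then $$\theta_1\ge (1-1/e)(\mathrm{OPT}-\gamma)+\beta-2(\theta_2-\gamma)\quad\text{and}\quad \theta_2\ge (1-1/e)(\mathrm{OPT}-\beta)+\gamma-2(\theta_1-\beta).$$
   Context: $V$ is a finite ground set with $|V|=n$; $k,l$ are integers with $1\le l<k\le n$. For $i=1,\dots,m$, $f_i:2^V\to\mathbb{R}_{\ge 0}$; monotone means $A\subseteq B\Rightarrow f_i(A)\le f_i(B)$, submodular means $f_i(A)+f_i(B)\ge f_i(A\cup B)+f_i(A\cap B)$. Write $\Delta_i(e\mid S)=f_i(S\cup\{e\})-f_i(S)$ and $$\mathrm{OPT}=\max_{S_{\rm tr}\subseteq V,\,|S_{\rm tr}|\le l}\;\sum_{i=1}^m\;\max_{S_i\subseteq V,\,|S_i|\le k-l} f_i(S_{\rm tr}\cup S_i).$$ Algorithm 1: start with all sets empty. Phase 1: for $t=1,\dots,l$, choose $e^*\in\arg\max_{e\in V\setminus S_{\rm tr}}\sum_{i}\Delta_i(e\mid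 S_{\rm tr})$ and add it to $S_{\rm tr}$. Phase 2: for $t=1,\dots,k-l$ and each $i$, choose $e_i^*\in\arg\max_{e\in V\setminus(S_{\rm tr}\cup S_i)}\Delta_i(e\mid S_{\rm tr}\cup S_i)$ and add it to $S_i$. Algorithm 2: start with all sets empty. Phase 1: for each $i$ and $t=1,\dots,k-l$, choose $e_i^*\in\arg\max_{e\in V\setminus S_i}\Delta_i(e\mid S_i)$ and add it to $S_i$. Phase 2: for $t=1,\dots,l$, choose $e^*\in\arg\max_{e\in V\setminus S_{\rm tr}}\sum_i\Delta_i(e\mid S_{\rm tr}\cup S_i)$ and add it to $S_{\rm tr}$. Ties are broken arbitrarily. *)

(* Defs.v *)
From HB Require Import structures.
From mathcomp Require Import all_boot all_order all_algebra.
From mathcomp Require Import reals sequences exp.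
Set Implicit Arguments. Unset Strict Implicit. Unset Printing Implicit Defensive.
Import Order.TTheory GRing.Theory Num.Theory.
Local Open Scope ring_scope.

Section Defs.
Variables (R : realType) (V : finType).

Definition monotone (f : {set V} -> R) :=
  forall A B : {set V}, A \subset B -> f A <= f B.
Definition submodular (f : {set V} -> R) :=
  forall A B : {set V}, f (A :|: B) + f (A :&: B) <= f A + f B.

Definition delta (f : {set V} -> R) (S : {set V}) (e : V) : R := f (e |: S) - f S.

Definition greedy_step (F : {set V} -> V -> R) (A : {set V}) (x : V) : Prop :=
  x \notin A /\ forall e, e \notin A -> F A e <= F A x.

(* s is a sequence of greedy choices (in order, ties arbitrary); the current
   set before choosing x is B together with the elements already chosen. *)
Definition greedy (F : {set V} -> V -> R) (B : {set V}) (s : seq V) : Prop :=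
  forall s1 x s2, s = s1 ++ x :: s2 -> greedy_step F (B :|: [set y in s1]) x.

Variable m : nat.

(* Algorithm 1: tr = sequence of Phase 1 choices, S i = Phase 2 choices for i *)
Definition alg1 (f : 'I_m -> {set V} -> R) (k l : nat)
  (tr : seq V) (S : 'I_m -> seq V) : Prop :=
  [/\ size tr = l,
      greedy (fun A e => \sum_(i < m) delta (f i) A e) set0 tr &
      forall i, size (S i) = (k - l)%N /\
        greedy (fun A e => delta (f i) A e) [set y in tr] (S i)].

(* Algorithm 2: S i = Phase 1 choices for i, tr = Phase 2 choices *)
Definition alg2 (f : 'I_m -> {set V} -> R) (k l : nat)
  (tr : seq V) (S : 'I_m -> seq V) : Prop :=
  [/\ (forall i, size (S i) = (k - l)%N /\
        greedy (fun A e => delta (f i) A e) set0 (S i)),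
      size tr = l &
      greedy (fun A e => \sum_(i < m) delta (f i) (A :|: [set y in S i]) e)
        set0 tr].

(* OPT; the big max with default 0 is the true max since f >= 0 and the
   index sets contain set0 *)
Definition OPT (f : 'I_m -> {set V} -> R) (k l : nat) : R :=
  \big[Num.max/0]_(T : {set V} | (#|T| <= l)%N)
    \sum_(i < m) \big[Num.max/0]_(S : {set V} | (#|S| <= k - l)%N) f i (T :|: S).

End Defs.

(* Main.v *)
Require Import Defs.
From HB Require Import structures.
From mathcomp Require Import all_boot all_order all_algebra.
From mathcomp Require Import reals sequences exp.
From mathcomp Require Import lra.
Import Order.TTheory GRing.Theory Num.Theory.
Local Open Scope ring_scope.

Section Aux.
Variables (R : realType) (V : finType).
Implicit Types (F : {set V} -> R).

Lemma sub_mono F : monotone F -> submodular F ->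
  forall W X Y Z : {set V}, W \subset X :|: Y -> Z \subset X -> Z \subset Y ->
  F W + F Z <= F X + F Y.
Proof.
move=> hm hs W X Y Z hW hZX hZY; apply: le_trans (hs X Y).
by apply: lerD; apply: hm => //; rewrite subsetI hZX.
Qed.

Lemma union_bound F : monotone F -> submodular F -> forall (A : {set V}) ts,
  F (A :|: [set x in ts]) <= F A + \sum_(t <- ts) (F (t |: A) - F A).
Proof.
move=> hm hs A; elim=> [|t ts IH].
  have -> : [set x in [::]] = set0 :> {set V} by apply/setP=> x; rewrite !inE.
  by rewrite setU0 big_nil addr0.
have -> : [set x in t :: ts] = t |: [set x in ts].
  by apply/setP=> x; rewrite !inE.
have h := sub_mono F hm hs (A :|: (t |: [set x in ts]))
   (A :|: [set x in ts]) (t |: A) A.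
have := h _ (subsetUl _ _) (subsetU1 _ _).
rewrite big_cons.
have -> : A :|: (t |: [set x in ts]) \subset A :|: [set x in ts] :|: (t |: A).
  by apply/subsetP=> x; rewrite !inE => /orP[->|/orP[->|->]]; rewrite ?orbT.
move=> /(_ isT) H; lra.
Qed.

Lemma greedy_ext (F1 F2 : {set V} -> V -> R) B s :
  (forall A e, F1 A e = F2 A e) -> greedy F1 B s -> greedy F2 B s.
Proof.
move=> h g s1 x s2 e; have [h1 h2] := g s1 x s2 e; split=> // e' he'.
by rewrite -!h; exact: h2.
Qed.

Lemma greedy_bound F : monotone F -> submodular F -> forall B s (T : {set V}),
  greedy (fun A e => F (e |: A) - F A) B s -> (#|T| <= size s)%N ->
  (0 < size s)%N ->
  (1 - (expR 1)^-1) * (F (B :|: T) - F B) <= F (B :|: [set y in s]) - F B.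
Proof.
move=> hm hs B s T hg hT hp.
have x0 : V by case: s hg hT hp => [|y ?] //.
set p := size s.
pose A j := B :|: [set y in take j s].
pose D j := F (B :|: T) - F (A j).
set P : R := p%:R.
have P0 : 0 < P by rewrite ltr0n.
set q := 1 - P^-1.
have step : forall j, (j < p)%N -> D j.+1 <= q * D j.
  move=> j hj; set x := nth x0 s j.
  have hsplit : s = take j s ++ x :: drop j.+1 s by rewrite -drop_nth ?cat_take_drop.
  have [hxn hmax] := hg _ _ _ hsplit; rewrite -/(A j) in hxn hmax.
  have hA1 : A j.+1 = x |: A j.
    rewrite /A (take_nth x0 hj); apply/setP=> y; rewrite !inE mem_rcons inE.
    by case: (y == x); case: (y \in B); case: (y \in take j s).
  set g := F (x |: A j) - F (A j).
  have g0 : 0 <= g by rewrite subr_ge0; apply: hm; apply: subsetU1.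
  have h1 : F (B :|: T) <= F (A j :|: T) by apply: hm; apply: setSU; apply: subsetUl.
  have h2 := union_bound F hm hs (A j) (enum T).
  have eT : [set x in enum T] = T by apply/setP=> y; rewrite !inE mem_enum.
  rewrite eT big_enum /= in h2.
  have h3 : \sum_(t in T) (F (t |: A j) - F (A j)) <= \sum_(t in T) g.
    apply: ler_sum => t _; case: (boolP (t \in A j)) => ht.
      have -> : t |: A j = A j.
        by apply/setUidPr; rewrite sub1set.
      by rewrite subrr.
    exact: (hmax t ht).
  rewrite sumr_const -mulr_natl in h3.
  have h4 : #|T|%:R * g <= P * g by apply: ler_wpM2r => //; rewrite ler_nat.
  have hD : D j <= P * (D j - D j.+1).
    rewrite /D hA1 -/g. have -> : F (B :|: T) - F (A j) - (F (B :|: T) - F (x |: A j)) = g.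
      by rewrite /g; lra.
    lra.
  have hD' : P^-1 * D j <= D j - D j.+1.
    have Pi0 : 0 <= P^-1 by rewrite invr_ge0 ltW.
    have := ler_wpM2l Pi0 hD.
    by rewrite mulrA mulVf ?gt_eqF // mul1r.
  rewrite /q mulrBl mul1r; lra.
have q0 : 0 <= q.
  rewrite /q subr_ge0 invf_le1 // ler1n; exact: hp.
have ind : forall j, (j <= p)%N -> D j <= q ^+ j * D 0%N.
  elim=> [|j IH] hj; first by rewrite expr0 mul1r.
  apply: le_trans (step j hj) _.
  rewrite exprS -mulrA; apply: ler_wpM2l => //; apply: IH; exact: ltnW.
have hqe : q ^+ p <= (expR 1)^-1.
  have h1 : q <= expR (- P^-1) by have := expR_ge1Dx (- P^-1).
  have h2 : q ^+ p <= expR (- P^-1) ^+ p.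
    by apply: lerXn2r => //; rewrite nnegrE // ltW // expR_gt0.
  by apply: (le_trans h2); rewrite -expRM_natr mulNr mulVf ?gt_eqF // expRN lexx.
have D00 : 0 <= D 0%N.
  rewrite /D /A take0; have -> : [set y in [::]] = set0 :> {set V}.
    by apply/setP=> y; rewrite !inE.
  by rewrite setU0 subr_ge0; apply: hm; apply: subsetUl.
have hDp := ind p (leqnn p).
have hDp' : D p <= (expR 1)^-1 * D 0%N.
  apply: (le_trans hDp); by apply: ler_wpM2r.
move: hDp'; rewrite /D /A take_size take0.
have -> : [set y in [::]] = set0 :> {set V} by apply/setP=> y; rewrite !inE.
rewrite setU0 mulrBl mul1r; lra.
Qed.

Lemma bigmax_ubc (I : finType) (Pr : pred I) (G : I -> R) c Z :
  0 <= c -> 0 <= Z -> (forall i, Pr i -> c * G i <= Z) ->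
  c * \big[Num.max/0]_(i | Pr i) G i <= Z.
Proof.
move=> c0 Z0 h; apply: (big_ind (fun y => c * y <= Z)) => //.
  by rewrite mulr0.
by move=> x y hx hy; rewrite maxEle; case: ifP.
Qed.

End Aux.
Arguments greedy_bound {R V}.
Arguments sub_mono {R V}.
Arguments greedy_ext {R V}.
Arguments union_bound {R V}.

Definition Gsum (R : realType) (V : finType) (m : nat) (f : 'I_m -> {set V} -> R)
  (Y : 'I_m -> {set V}) (A : {set V}) : R := \sum_(i < m) f i (A :|: Y i).

Arguments Gsum {R V m}.
Local Notation cc := (1 - (expR 1)^-1).

Ltac subs := let x := fresh in apply/subsetP => x; rewrite !inE; by case/orP => ->; rewrite ?orbT.

Theorem mainTheorem8 (R : realType) (V : finType) (m k l : nat)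
  (f : 'I_m -> {set V} -> R)
  (hl : (1 <= l)%N) (hlk : (l < k)%N) (hkn : (k <= #|V|)%N)
  (f_ge0 : forall i A, 0 <= f i A)
  (f_mono : forall i, monotone (f i))
  (f_sub : forall i, submodular (f i))
  (tr1 : seq V) (S1 : 'I_m -> seq V) (tr2 : seq V) (S2 : 'I_m -> seq V)
  (h1 : alg1 f k l tr1 S1) (h2 : alg2 f k l tr2 S2) :
  let theta1 := \sum_(i < m) f i ([set y in tr1] :|: [set y in S1 i]) in
  let theta2 := \sum_(i < m) f i ([set y in tr2] :|: [set y in S2 i]) in
  let beta := \sum_(i < m) f i [set y in tr1] in
  let gamma := \sum_(i < m) f i [set y in S2 i] in
  theta1 >= (1 - (expR 1)^-1) * (OPT f k l - gamma) + beta - 2 * (theta2 - gamma)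
  /\
  theta2 >= (1 - (expR 1)^-1) * (OPT f k l - beta) + gamma - 2 * (theta1 - beta).
Proof.
cbv zeta.
case: h1 => hT1sz hg1 hS1; case: h2 => hS2 hT2sz hg2.
have e1 : 1 <= expR 1 :> R by have := expR_ge1Dx (1:R); lra.
have c0 : 0 <= cc :> R by rewrite subr_ge0 invf_le1 // expR_gt0.
have hkl : (0 < k - l)%N by rewrite subn_gt0.
have G1 : forall i (S : {set V}), (#|S| <= k - l)%N ->
    cc * (f i ([set y in tr1] :|: S) - f i [set y in tr1])
    <= f i ([set y in tr1] :|: [set y in S1 i]) - f i [set y in tr1].
  move=> i S hS; have [hsz hg] := hS1 i.
  apply: (greedy_bound (f i) (f_mono i) (f_sub i) [set y in tr1] (S1 i) S); last 2 first.
  - by rewrite hsz.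
  - by rewrite hsz.
  by apply: (greedy_ext _ _ _ _ _ hg).
pose Y i := [set y in S2 i].
have Gm : monotone (Gsum f Y).
  move=> A B hAB; apply: ler_sum => i _; apply: f_mono; exact: setSU.
have Gs : submodular (Gsum f Y).
  move=> A B; rewrite /Gsum -!big_split /=; apply: ler_sum => i _.
  have -> : A :|: B :|: Y i = (A :|: Y i) :|: (B :|: Y i).
    by rewrite setUACA setUid.
  have -> : A :&: B :|: Y i = (A :|: Y i) :&: (B :|: Y i).
    by rewrite setUIl.
  exact: f_sub.
have G2 : forall T : {set V}, (#|T| <= l)%N ->
    cc * (\sum_(i < m) f i (T :|: [set y in S2 i]) - \sum_(i < m) f i [set y in S2 i])
    <= \sum_(i < m) f i ([set y in tr2] :|: [set y in S2 i]) - \sum_(i < m) f i [set y in S2 i].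
  move=> T hT.
  have H := greedy_bound (Gsum f Y) Gm Gs set0 tr2 T.
  have G0 : Gsum f Y set0 = \sum_(i < m) f i [set y in S2 i].
    by apply: eq_bigr => i _; rewrite set0U.
  rewrite !set0U G0 /Gsum in H; apply: H; last by rewrite hT2sz.
  - apply: (greedy_ext _ _ _ _ _ hg2) => A e.
    rewrite /Gsum /delta -sumrB; apply: eq_bigr => i _; by rewrite setUA.
  - by rewrite hT2sz.
have mono_i : forall i (A B : {set V}), A \subset B -> f i A <= f i B.
  by move=> i; apply: f_mono.
have ab0 : \sum_(i < m) f i [set y in tr1] <= \sum_(i < m) f i ([set y in tr1] :|: [set y in S1 i]).
  by apply: ler_sum => i _; apply: mono_i; apply: subsetUl.
have gb0 : \sum_(i < m) f i [set y in S2 i] <= \sum_(i < m) f i ([set y in tr2] :|: [set y in S2 i]).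
  by apply: ler_sum => i _; apply: mono_i; apply: subsetUr.
have g0 : 0 <= \sum_(i < m) f i [set y in S2 i] by apply: sumr_ge0.
have b0 : 0 <= \sum_(i < m) f i [set y in tr1] by apply: sumr_ge0.
have hT1 : (#|[set y in tr1]| <= l)%N by rewrite cardsE -hT1sz card_size.
have hY : forall i, (#|[set y in S2 i]| <= k - l)%N.
  by move=> i; rewrite cardsE -(hS2 i).1 card_size.
have cg0 : 0 <= cc * \sum_(i < m) f i [set y in S2 i] by apply: mulr_ge0.
have cb0 : 0 <= cc * \sum_(i < m) f i [set y in tr1] by apply: mulr_ge0.
have OPT1 : cc * OPT f k l <=
   (\sum_(i < m) f i ([set y in tr1] :|: [set y in S1 i]) - \sum_(i < m) f i [set y in tr1])
   + 2 * (\sum_(i < m) f i ([set y in tr2] :|: [set y in S2 i]) - \sum_(i < m) f i [set y in S2 i])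
   + cc * \sum_(i < m) f i [set y in S2 i].
  rewrite /OPT; apply: bigmax_ubc => // [|T hT]; first lra.
  rewrite mulr_sumr.
  apply: (@le_trans _ _ (\sum_(i < m) ((f i ([set y in tr1] :|: [set y in S1 i]) - f i [set y in tr1])
     + cc * ((f i ([set y in tr1] :|: [set y in S2 i]) - f i [set y in S2 i])
            + (f i (T :|: [set y in S2 i]) - f i [set y in S2 i]) + f i [set y in S2 i])))).
    apply: ler_sum => i _.
    have a0 : 0 <= f i ([set y in tr1] :|: [set y in S1 i]) - f i [set y in tr1].
      by rewrite subr_ge0; apply: mono_i; apply: subsetUl.
    have r1 : f i [set y in S2 i] <= f i ([set y in tr1] :|: [set y in S2 i]).
      by apply: mono_i; apply: subsetUr.
    have r2 : f i [set y in S2 i] <= f i (T :|: [set y in S2 i]).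
      by apply: mono_i; apply: subsetUr.
    apply: bigmax_ubc => // [|S hS].
      apply: addr_ge0 => //; apply: mulr_ge0 => //.
      have := f_ge0 i [set y in S2 i]; lra.
    have hsm1 := sub_mono (f i) (f_mono i) (f_sub i) (T :|: S) (S :|: [set y in S2 i])
      (T :|: [set y in S2 i]) [set y in S2 i].
    have hsm2 := sub_mono (f i) (f_mono i) (f_sub i) (S :|: [set y in S2 i])
      ([set y in tr1] :|: S) ([set y in tr1] :|: [set y in S2 i]) [set y in tr1].
    have {}hsm1 := hsm1 ltac:(subs) (subsetUr _ _) (subsetUr _ _).
    have {}hsm2 := hsm2 ltac:(subs) (subsetUl _ _) (subsetUl _ _).
    have hG1 := G1 i S hS.
    have H : f i (T :|: S) <= (f i ([set y in tr1] :|: S) - f i [set y in tr1])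
       + ((f i ([set y in tr1] :|: [set y in S2 i]) - f i [set y in S2 i])
            + (f i (T :|: [set y in S2 i]) - f i [set y in S2 i]) + f i [set y in S2 i]).
      lra.
    have := ler_wpM2l c0 H; rewrite mulrDr; lra.
  have g1 := G2 _ hT1; have g2 := G2 _ hT.
  rewrite big_split /= -mulr_sumr !big_split /= !sumrN.
  lra.
have OPT2 : cc * OPT f k l <=
   (\sum_(i < m) f i ([set y in tr2] :|: [set y in S2 i]) - \sum_(i < m) f i [set y in S2 i])
   + 2 * (\sum_(i < m) f i ([set y in tr1] :|: [set y in S1 i]) - \sum_(i < m) f i [set y in tr1])
   + cc * \sum_(i < m) f i [set y in tr1].
  rewrite /OPT; apply: bigmax_ubc => // [|T hT]; first lra.
  rewrite mulr_sumr.
  apply: (@le_trans _ _ (\sum_(i < m) ((f i ([set y in tr1] :|: [set y in S1 i]) - f i [set y in tr1])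
     + cc * ((f i (T :|: [set y in S2 i]) - f i [set y in S2 i])
            + (f i ([set y in tr1] :|: [set y in S2 i]) - f i [set y in tr1]) + f i [set y in tr1])))).
    apply: ler_sum => i _.
    have a0 : 0 <= f i ([set y in tr1] :|: [set y in S1 i]) - f i [set y in tr1].
      by rewrite subr_ge0; apply: mono_i; apply: subsetUl.
    have r1 : f i [set y in tr1] <= f i ([set y in tr1] :|: [set y in S2 i]).
      by apply: mono_i; apply: subsetUl.
    have r2 : f i [set y in S2 i] <= f i (T :|: [set y in S2 i]).
      by apply: mono_i; apply: subsetUr.
    apply: bigmax_ubc => // [|S hS].
      apply: addr_ge0 => //; apply: mulr_ge0 => //.
      have := f_ge0 i [set y in tr1]; lra.
    have hsm1 := sub_mono (f i) (f_mono i) (f_sub i) (T :|: S) (T :|: [set y in tr1])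
      ([set y in tr1] :|: S) [set y in tr1].
    have hsm2 := sub_mono (f i) (f_mono i) (f_sub i) (T :|: [set y in tr1])
      (T :|: [set y in S2 i]) ([set y in tr1] :|: [set y in S2 i]) [set y in S2 i].
    have {}hsm1 := hsm1 ltac:(subs) (subsetUr _ _) (subsetUl _ _).
    have {}hsm2 := hsm2 ltac:(subs) (subsetUr _ _) (subsetUr _ _).
    have hG1 := G1 i S hS.
    have H : f i (T :|: S) <= (f i ([set y in tr1] :|: S) - f i [set y in tr1])
       + ((f i (T :|: [set y in S2 i]) - f i [set y in S2 i])
            + (f i ([set y in tr1] :|: [set y in S2 i]) - f i [set y in tr1]) + f i [set y in tr1]).
      lra.
    have := ler_wpM2l c0 H; rewrite mulrDr; lra.
  have g2 := G2 _ hT.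
  have g1 : cc * \sum_(i < m) (f i ([set y in tr1] :|: [set y in S2 i]) - f i [set y in tr1])
      <= \sum_(i < m) (f i ([set y in tr1] :|: [set y in S1 i]) - f i [set y in tr1]).
    rewrite mulr_sumr; apply: ler_sum => i _; exact: G1 i _ (hY i).
  rewrite sumrB in g1; rewrite sumrB in g1.
  rewrite big_split /= -mulr_sumr !big_split /= !sumrN.
  lra.
split; rewrite mulrBr; lra.
Qed.
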